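(* Let $d$ be a positive integer and let $A\in\mathbb{R}^{[2]\times[n]}$ be a matrix that does not have an elimination ordering. Then there exists $b\in\mathbb{R}^{[2]}$ such that the solution graph $G(R(A,b))$ is not connected.
   Context: Fix a positive integer $d$ and let $D=\{0,1,\dots,d\}$; $[n]=\{1,\dots,n\}$. For $A\in\mathbb{R}^{[m]\times[n]}$ and $b\in\mathbb{R}^{[m]}$, $R(A,b)=\{x\in D^{[n]} : Ax\ge b\}$. For $R\subseteq D^{[n]}$, the solution graph $G(R)$ is the undirected graph with vertex set $R$ in which $x,y$ are adjacent iff they differ in exactly one coordinate. A matrix $A=(a_{ij})$ with column index set $J$ can be eliminated at column $j\in J$ if (i) for every row $i$ with $a_{ij}>0$ we have $a_{ij'}=0$ for all $j'\in J\setminus\{j\}$, or (ii) for every row $i$ with $a_{ij}<0$ we have $a_{ij'}=0$ for all $j'\in J\setminus\{j\}$. For $J'\subseteq[n]$, $\mathrm{elm}(A,J')$ is the submatrix of $A$ obtained by deleting the columns indexed by $J'$. A sequence $(j_1,\dots,j_n)$ of the elements of $[n]$ is an elimination ordering (EO) of $A$ if for every $t\in[n]$ the matrix $\mathrm{elm}(A,\{j_1,\dots,j_{t-1}\})$ can be eliminated at column $j_t$. *)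

(* Defs.v *)
From mathcomp Require Import all_boot all_order all_algebra.
From mathcomp Require Export reals.
Set Implicit Arguments. Unset Strict Implicit. Unset Printing Implicit Defensive.
Import Order.TTheory GRing.Theory Num.Theory.
Local Open Scope ring_scope.

Definition point (d n : nat) := {ffun 'I_n -> 'I_d.+1}.

Definition in_R (R : realType) (d m n : nat) (A : 'M[R]_(m, n)) (b : 'cV[R]_m)
  (x : point d n) : bool :=
  [forall i : 'I_m, b i 0 <= \sum_(j < n) A i j * (x j : nat)%:R].

Definition adj (d n : nat) (x y : point d n) : bool :=
  #|[set j : 'I_n | x j != y j]| == 1%N.

Definition sol_edge (R : realType) (d m n : nat) (A : 'M[R]_(m, n)) (b : 'cV[R]_m)
  : rel (point d n) :=
  fun x y => [&& in_R A b x, in_R A b y & adj x y].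

Definition sol_graph_connected (R : realType) (d m n : nat) (A : 'M[R]_(m, n))
  (b : 'cV[R]_m) : Prop :=
  forall x y : point d n, in_R A b x -> in_R A b y -> connect (sol_edge A b) x y.

(* The submatrix of A with remaining column index set J (i.e. elm(A, [n] \ J))
   can be eliminated at column j \in J. *)
Definition can_elim (R : realType) (m n : nat) (A : 'M[R]_(m, n))
  (J : {set 'I_n}) (j : 'I_n) : bool :=
  (j \in J) &&
  ([forall i : 'I_m, (0 < A i j) ==> [forall j' in J :\ j, A i j' == 0]] ||
   [forall i : 'I_m, (A i j < 0) ==> [forall j' in J :\ j, A i j' == 0]]).

Fixpoint eo_ok (R : realType) (m n : nat) (A : 'M[R]_(m, n))
  (J : {set 'I_n}) (s : seq 'I_n) : bool :=
  if s is j :: s' then can_elim A J j && eo_ok A (J :\ j) s' else true.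

Definition elimination_ordering (R : realType) (m n : nat) (A : 'M[R]_(m, n))
  (s : seq 'I_n) : Prop :=
  perm_eq s (enum 'I_n) /\ eo_ok A [set: 'I_n] s.

Definition has_EO (R : realType) (m n : nat) (A : 'M[R]_(m, n)) : Prop :=
  exists s : seq 'I_n, elimination_ordering A s.

(* Main.v *)
Require Import Defs.
From mathcomp Require Import all_boot all_order all_algebra.
From mathcomp Require Import reals.
From mathcomp Require Import ring lra.
Set Implicit Arguments. Unset Strict Implicit. Unset Printing Implicit Defensive.
Import Order.TTheory GRing.Theory Num.Theory.

Section L4.
Local Open Scope ring_scope.
Variables (R : realType) (d n : nat) (A : 'M[R]_(2, n)).

Lemma exists_max (S : {set 'I_n}) (f : 'I_n -> R) j0 : j0 \in S ->
  exists2 p, p \in S & forall j, j \in S -> f j <= f p.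
Proof.
move=> Hj0; case: (@arg_maxP _ R _ j0 (fun j => j \in S) f Hj0) => p Hp Hm.
by exists p.
Qed.

Lemma ord2 (i : 'I_2) : i = ord0 \/ i = ord_max.
Proof.
case: i => [[|[|k]]] Hi; [left|right|by []]; exact: val_inj.
Qed.

Definition isO j : bool := A ord0 j * A ord_max j < 0.
Definition fl j : bool :=
  if isO j then A ord0 j < 0 else (0 < A ord0 j) || (0 < A ord_max j).
Definition A' i j := if fl j then - A i j else A i j.
Definition tt (x : point d n) j : nat := if fl j then (d - x j)%N else x j.
Definition K i := \sum_j (if fl j then A i j * d%:R else 0).
Definition S i x := \sum_j A' i j * (tt x j)%:R.

Lemma sum_decomp i (x : point d n) :
  \sum_j A i j * (x j : nat)%:R = S i x + K i.
Proof.
rewrite /K /S -big_split /=; apply: eq_bigr => j _; rewrite /A' /tt.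
case: (fl j); last by rewrite addr0.
rewrite natrB; last by rewrite -ltnS ltn_ord.
ring.
Qed.

Lemma A'_O j : isO j -> 0 < A' ord0 j /\ A' ord_max j < 0.
Proof.
rewrite /A' /fl => H; rewrite H; move: H; rewrite /isO => H.
case: (ltrP (A ord0 j) 0) => Ha.
  split; nra.
have Ha' : 0 < A ord0 j.
  rewrite lt_neqAle Ha andbT; apply/eqP => a0; by rewrite -a0 mul0r ltxx in H.
split; nra.
Qed.

Lemma A'_nO j : ~~ isO j -> A' ord0 j <= 0 /\ A' ord_max j <= 0.
Proof.
rewrite /A' /fl => H; rewrite (negbTE H); move: H; rewrite /isO -leNgt => H.
case: (ltrP 0 (A ord0 j)) => Ha /=.
  split; nra.
case: (ltrP 0 (A ord_max j)) => Hc /=; split; nra.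
Qed.

Lemma A'_le0 j : A' ord_max j <= 0.
Proof.
case H: (isO j); [by case: (A'_O H) => _ /ltW| by case: (A'_nO (negbT H))].
Qed.


Lemma adj_sym (x y : point d n) : adj x y = adj y x.
Proof.
rewrite /adj; congr (_ == _); apply: eq_card => j; by rewrite !inE eq_sym.
Qed.

Definition ept (k : 'I_n) : point d n :=
  [ffun j => inord (if fl j then (d - (j == k))%N else (j == k : nat))].

Lemma tt_ept (hd : (0 < d)%N) k j : tt (ept k) j = (j == k).
Proof.
rewrite /tt /ept ffunE; case: (fl j).
  rewrite inordK; last by rewrite ltnS leq_subr.
  by rewrite subKn //; case: (j == k).
by rewrite inordK //; case: (j == k).
Qed.

Lemma S_ept (hd : (0 < d)%N) i k : S i (ept k) = A' i k.
Proof.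
rewrite /S (bigD1 k) //= big1 => [|j /negbTE Hj]; rewrite tt_ept //.
  by rewrite eqxx mulr1 addr0.
by rewrite Hj mulr0.
Qed.

Variables (p q : 'I_n).
Hypotheses (Hp : isO p) (Hq : isO q) (Hpq : q != p)
  (Hpmax : forall j, isO j -> A' ord_max j <= A' ord_max p)
  (Hqmax : forall j, isO j -> j != p -> A' ord_max j <= A' ord_max q).

Definition B (i : 'I_2) : R :=
  if i == ord0 then Num.min (A' ord0 p) (A' ord0 q) else A' ord_max q.
Definition bb : 'cV[R]_2 := \col_i (B i + K i).

Lemma inR_iff x : in_R A bb x = (B ord0 <= S ord0 x) && (B ord_max <= S ord_max x).
Proof.
rewrite /in_R; apply/forallP/andP => [H|[H0 H1] i].
  by split; [have := H ord0 | have := H ord_max]; rewrite mxE sum_decomp lerD2r.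
by case: (ord2 i) => ->; rewrite mxE sum_decomp lerD2r.
Qed.

Lemma B0_gt0 : 0 < B ord0.
Proof.
rewrite /B eqxx lt_min; case: (A'_O Hp) => -> _; by case: (A'_O Hq) => -> _.
Qed.

Lemma key (x y : point d n) : in_R A bb x -> in_R A bb y -> adj x y ->
  (0 < tt x p)%N -> tt y p = 0%N -> False.
Proof.
rewrite !inR_iff => /andP[_ Hx1] /andP[Hy0 _] Hadj Htx Hty.
have Hxyp : x p != y p.
  apply/eqP => E; move: Htx; by rewrite /tt E -/(tt y p) Hty.
have hxy : forall l, l != p -> tt x l = tt y l.
  move=> l Hl; move: Hadj; rewrite /adj => /cards1P[k Hk].
  have : p \in [set j | x j != y j] by rewrite inE.
  rewrite Hk inE => /eqP Epk.
  have : l \notin [set j | x j != y j] by rewrite Hk inE -Epk.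
  rewrite inE => /negPn/eqP E; by rewrite /tt E.
have [j Hj|Hn] := pickP (fun j => [&& isO j, j != p & (0 < tt y j)%N]); last first.
  have : S ord0 y <= 0.
    apply: sumr_le0 => j _.
    case: (eqVneq j p) => [->|Hjp]; first by rewrite Hty mulr0.
    case HO: (isO j).
      by move: (Hn j); rewrite HO Hjp /= => /negbT; rewrite lt0n negbK => /eqP ->; rewrite mulr0.
    apply: mulr_le0_ge0 => //; by case: (A'_nO (negbT HO)).
  have := B0_gt0; lra.
move: Hj => /and3P[HjO Hjp Htj].
move: Hx1; rewrite /S (bigD1 p) //= (bigD1 j) //=.
have Hrest : \sum_(i | (i != p) && (i != j)) A' ord_max i * (tt x i)%:R <= 0.
  apply: sumr_le0 => i _; apply: mulr_le0_ge0 => //; exact: A'_le0.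
have Hp1 : 1 <= (tt x p)%:R :> R by rewrite ler1n.
have Hj1 : 1 <= (tt x j)%:R :> R by rewrite ler1n hxy.
case: (A'_O Hp) => _ Hap; case: (A'_O HjO) => _ Haj.
have := Hqmax HjO Hjp.
rewrite /B /=.
nra.
Qed.

Lemma disconnected (hd : (0 < d)%N) : ~ @sol_graph_connected R d 2 n A bb.
Proof.
move=> Hc.
have inp : in_R A bb (ept p).
  rewrite inR_iff !S_ept // /B eqxx /= ge_min lexx /=; exact: Hpmax.
have inq : in_R A bb (ept q).
  by rewrite inR_iff !S_ept // /B eqxx /= ge_min lexx orbT /=.
have cl : closed (sol_edge A bb) [pred x | (0 < tt x p)%N].
  move=> x y /and3P[Hx Hy Hxy]; rewrite !inE.
  case Ex: (0 < tt x p)%N; case Ey: (0 < tt y p)%N => //.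
    by exfalso; apply: (key Hx Hy Hxy Ex); apply/eqP; rewrite -leqn0 leqNgt Ey.
  exfalso; rewrite adj_sym in Hxy.
  by apply: (key Hy Hx Hxy Ey); apply/eqP; rewrite -leqn0 leqNgt Ex.
have := closed_connect cl (Hc _ _ inp inq).
by rewrite !inE !tt_ept // eqxx eq_sym (negbTE Hpq).
Qed.

End L4.

Section EO.
Local Open Scope ring_scope.
Variables (R : realType) (n : nat) (A : 'M[R]_(2, n)).

Lemma nonO_elim (J : {set 'I_n}) j : ~~ isO A j -> j \in J -> can_elim A J j.
Proof.
rewrite /isO -leNgt => H Hj; rewrite /can_elim Hj /=.
have : ((A ord0 j <= 0) && (A ord_max j <= 0)) || ((0 <= A ord0 j) && (0 <= A ord_max j)).
  case: (lerP 0 (A ord0 j)) => Ha; case: (lerP 0 (A ord_max j)) => Hc /=.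
  - by rewrite orbT.
  - have -> : A ord0 j <= 0 by nra.
    by rewrite ltW.
  - have -> : A ord_max j <= 0 by nra.
    by rewrite ltW.
  - by rewrite !ltW.
case/orP => /andP[H0 H1].
  apply/orP; left; apply/forallP => i; apply/implyP.
  by case: (ord2 i) => ->; rewrite ltNge ?H0 ?H1.
apply/orP; right; apply/forallP => i; apply/implyP.
by case: (ord2 i) => ->; rewrite ltNge ?H0 ?H1.
Qed.

Lemma eo_cat s1 s2 (J : {set 'I_n}) : all (fun j => ~~ isO A j) s1 -> uniq s1 -> {subset s1 <= J} ->
  eo_ok A J (s1 ++ s2) = eo_ok A (J :\: [set x in s1]) s2.
Proof.
elim: s1 J => [|j s1 IH] J /=.
  by move=> _ _ _; congr eo_ok; apply/setP => x; rewrite !inE.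
move=> /andP[Hj Hs] /andP[Hjs Hu] Hsub.
rewrite nonO_elim //; last by apply: Hsub; rewrite inE eqxx.
rewrite /= IH //.
  congr eo_ok; apply/setP => x; rewrite !inE negb_or; by case: (x == j); case: (x \in s1).
move=> x Hx; rewrite in_setD1 Hsub ?inE ?Hx ?orbT // andbT.
by apply: contraNneq Hjs => <-.
Qed.

Lemma eo_small (J : {set 'I_n}) s : (#|J| <= 1)%N -> uniq s -> {subset s <= J} -> eo_ok A J s.
Proof.
elim: s J => [|j s IH] J //= HJ /andP[Hjs Hu] Hsub.
have HjJ : j \in J by apply: Hsub; rewrite inE eqxx.
have E : J :\ j = set0.
  apply: cards0_eq; move: HJ; rewrite (cardsD1 j J) HjJ; by case: #|_|.
apply/andP; split.
  rewrite /can_elim HjJ /=; apply/orP; left; apply/forallP => i; apply/implyP => _.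
  by apply/forallP => j'; rewrite E in_set0.
apply: IH => //; first by rewrite E cards0.
move=> x Hx; rewrite in_setD1 Hsub ?inE ?Hx ?orbT // andbT.
by apply: contraNneq Hjs => <-.
Qed.

Lemma small_EO : (#|[set j | isO A j]| <= 1)%N -> has_EO A.
Proof.
move=> Hc.
set a := (fun j => ~~ isO A j).
exists ([seq j <- enum 'I_n | a j] ++ [seq j <- enum 'I_n | predC a j]).
split; first by rewrite perm_filterC.
rewrite eo_cat.
- apply: eo_small.
  + apply: leq_trans Hc; apply: subset_leq_card; apply/subsetP => x.
    rewrite !inE mem_filter mem_enum /a /=; by case: (isO A x).
  + by apply: filter_uniq; exact: enum_uniq.
  + move=> x; rewrite !inE !mem_filter /a /=; by case: (isO A x).
- by apply/allP => x; rewrite mem_filter => /andP[].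
- by apply: filter_uniq; exact: enum_uniq.
- by move=> x; rewrite inE.
Qed.

End EO.

Theorem lemma4 (R : realType) (d n : nat) (hd : (0 < d)%N) (A : 'M[R]_(2, n)) :
  ~ has_EO A ->
  exists b : 'cV[R]_2, ~ @sol_graph_connected R d 2 n A b.
Proof.
move=> HEO.
have Hc : (1 < #|[set j | isO A j]|)%N.
  by rewrite ltnNge; apply/negP => H; apply: HEO; apply: small_EO.
have [p0 Hp0] : exists p0, p0 \in [set j | isO A j].
  by apply/set0Pn; rewrite -card_gt0; apply: ltnW.
have [p Hp Hpmax] := exists_max (fun j => A' A ord_max j) Hp0.
have Hc' : (0 < #|[set j | isO A j] :\ p|)%N.
  by move: Hc; rewrite (cardsD1 p) Hp.
have [q0 Hq0] : exists q0, q0 \in [set j | isO A j] :\ p.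
  by apply/set0Pn; rewrite -card_gt0.
have [q Hq Hqmax] := exists_max (fun j => A' A ord_max j) Hq0.
move: Hp Hq; rewrite in_setD1 !inE => Hp /andP[Hqp Hq].
exists (@bb R d n A p q).
apply: (disconnected Hp Hq Hqp) => //.
- by move=> j Hj; apply: Hpmax; rewrite inE.
- by move=> j Hj Hjp; apply: Hqmax; rewrite in_setD1 inE Hj Hjp.
Qed.
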